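(* Let $\Sigma=(\mathbb{N}_0,X,U,\mathscr{U},\phi)$ be a control system as in the standing setup and let $Q\subset X$ be a control set. If $\mathrm{EIM}_k(Q)\cap\operatorname{Int}(Q)\ne\emptyset$ for some $k\in\mathbb N$, then $\mathrm{EIM}_k(Q)=Q$.
   Context: Standing setup: $(X,d)$ is a metric space, $U$ is a compact metric space, and $F:X\times U\to X$ is a map such that $F_u:=F(\cdot,u)$ is continuous for every $u\in U$. Let $\mathscr U=U^{\mathbb N_0}$ with the product topology. For $\omega=(\omega_0,\omega_1,\dots)\in\mathscr U$, $x\in X$, set $\phi(0,x,\omega)=x$ and $\phi(k,x,\omega)=F_{\omega_{k-1}}\circ\cdots\circ F_{\omega_0}(x)$ for $k\ge1$. It is assumed that $\phi:\mathbb N_0\times X\times\mathscr U\to X$ is continuous. Notation: $\mathbb N=\{1,2,\dots\}$; $B(x,\delta)$ is the open ball; $d(y,Q)=\inf_{q\in Q}d(y,q)$; $\operatorname{Int}(Q)$ is the interior of $Q$ in $X$. Control set: $D\subset X$ is a control set if (i) for every $x\in D$ there is $\omega\in\mathscr U$ with $\phi(k,x,\omega)\in D$ for all $k\in\mathbb N_0$; (ii) for every $x\in D$, $D\subset\operatorname{cl}\mathcal O^+(x)$, where $\mathcal O^+(x)=\{\phi(m,x,\omega):m\in\mathbb N_0,\omega\in\mathscr U\}$; (iii) $D$ is maximal with (i) and (ii). For $k\in\mathbb N$: $\mathrm{EIM}_k(Q)$ is the set of $x\in Q$ for which there exist $\delta>0$ and $\omega\in\mathscr U$ such that $\frac1n\sum_{i=0}^{n-1}d(\phi(i,y,\omega),Q)<\frac1k$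 for all $n\in\mathbb N$ and all $y\in B(x,\delta)\cap Q$. *)

(* Defs.v *)
From HB Require Import structures.
From mathcomp Require Import all_boot all_order all_algebra.
From mathcomp Require Import all_classical all_reals all_analysis.
Set Implicit Arguments. Unset Strict Implicit. Unset Printing Implicit Defensive.
Import Order.TTheory GRing.Theory Num.Theory.
Local Open Scope classical_set_scope.
Local Open Scope ring_scope.

Section ControlSystem.
Context {R : realType} {X U : metricType R} (F : X -> U -> X).

Fixpoint phi (k : nat) (x : X) (w : nat -> U) : X :=
  match k with
  | 0 => x
  | k.+1 => F (phi k x w) (w k)
  end.

Definition setdist (y : X) (Q : set X) : R := inf [set mdist y q | q in Q].

Definition orbit_plus (x : X) : set X :=
  [set y | exists (m : nat) (w : nat -> U), y = phi m x w].

Definition cs_invariant (D : set X) : Prop :=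
  forall x, D x -> exists w : nat -> U, forall k, D (phi k x w).

Definition cs_approx_ctrl (D : set X) : Prop :=
  forall x, D x -> D `<=` closure (orbit_plus x).

Definition control_set (D : set X) : Prop :=
  [/\ cs_invariant D, cs_approx_ctrl D &
      forall D', cs_invariant D' -> cs_approx_ctrl D' -> D `<=` D' -> D' = D].

Definition EIM (k : nat) (Q : set X) : set X :=
  [set x | Q x /\ exists (delta : R) (w : nat -> U), 0 < delta /\
     forall (n : nat) (y : X), (0 < n)%N -> ball x delta y -> Q y ->
       n%:R^-1 * (\sum_(0 <= i < n) setdist (phi i y w) Q) < k%:R^-1].

End ControlSystem.

(* Main.v *)
Require Import Defs.
From HB Require Import structures.
From mathcomp Require Import all_boot all_order all_algebra.
From mathcomp Require Import all_classical all_reals all_analysis.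
Import Order.TTheory GRing.Theory Num.Theory.
Local Open Scope classical_set_scope.
Local Open Scope ring_scope.

Lemma avg_aux (R : realType) (a b c S : R) : 0 < a -> a <= b -> 0 < c -> a^-1 * S < c -> b^-1 * S < c.
Proof.
move=> a0 ab c0 h.
have b0 : 0 < b by apply: lt_le_trans ab.
have iab : b^-1 <= a^-1 by rewrite lef_pV2 ?posrE.
have ia0 : 0 < a^-1 by rewrite invr_gt0.
have ib0 : 0 < b^-1 by rewrite invr_gt0.
case: (leP S 0) => S0.
  by apply: le_lt_trans c0; rewrite pmulr_rle0.
apply: le_lt_trans h; by rewrite ler_pM2r.
Qed.

Section Aux.
Context {R : realType} {X U : metricType R} (F : X -> U -> X).

Definition cat (m : nat) (w v : nat -> U) : nat -> U :=
  fun i => if (i < m)%N then w i else v (i - m)%N.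

Lemma phi_cat m w v x n :
  phi F n x (cat m w v) = if (n <= m)%N then phi F n x w else phi F (n - m) (phi F m x w) v.
Proof.
elim: n => [|n IH] /=; first by [].
case: (ltnP n m) => nm.
  have cn : cat m w v n = w n by rewrite /cat nm.
  by rewrite (ltnW nm) in IH; rewrite IH cn.
have cn : cat m w v n = v (n - m)%N by rewrite /cat ltnNge nm.
rewrite cn subSn //=.
case: (eqVneq n m) IH => [-> |nem] IH.
  by rewrite leqnn in IH; rewrite IH subnn.
have nm' : (n <= m)%N = false by apply/negbTE; rewrite -ltnNge ltn_neqAle eq_sym nem.
by rewrite nm' in IH; rewrite IH.
Qed.

Lemma phi_cat2 m w v x j :
  phi F (m + j) x (cat m w v) = phi F j (phi F m x w) v.
Proof.
rewrite phi_cat; case: ifP => h.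
  by move: h; rewrite -{2}(addn0 m) leq_add2l leqn0 => /eqP ->; rewrite addn0.
by rewrite addKn.
Qed.

Lemma phi_shift j i x w :
  phi F (j + i) x w = phi F i (phi F j x w) (fun l => w (j + l)%N).
Proof. by elim: i => [|i IH] /=; rewrite ?addn0 // addnS /= IH. Qed.

Lemma phi_cont (hF : forall u : U, continuous (fun x : X => F x u)) i w :
  continuous (fun x => phi F i x w).
Proof.
elim: i => [|i IH] /=; first by move=> x; exact: cvg_id.
move=> x; apply: (continuous_comp (f := fun y => phi F i y w) (g := fun y => F y (w i))).
  exact: IH.
exact: hF.
Qed.

Lemma orbit_trans p z : orbit_plus F p z -> orbit_plus F z `<=` orbit_plus F p.
Proof.
move=> [m [w ->]] y [j [v ->]].
by exists (m + j)%N, (cat m w v); rewrite phi_cat2.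
Qed.

Lemma cl_phi (hF : forall u : U, continuous (fun x : X => F x u)) p x i w :
  closure (orbit_plus F p) x -> closure (orbit_plus F p) (phi F i x w).
Proof.
move=> cx B hB.
have := phi_cont hF i w x B hB => /cx [z [oz Bz]].
exists (phi F i z w); split => //.
have := @orbit_trans p z oz (phi F i z w). apply. by exists i, w.
Qed.

Lemma traj_in (hF : forall u : U, continuous (fun x : X => F x u)) Q :
  control_set F Q -> forall x m w, Q x -> Q (phi F m x w) ->
  forall j, (j <= m)%N -> Q (phi F j x w).
Proof.
move=> [inv apc max] x m w Qx Qm.
pose Q' := fun z => Q z \/ exists j, (j <= m)%N /\ z = phi F j x w.
have QQ' : Q `<=` Q' by move=> z; left.
suff <- : Q' = Q by move=> j jm; right; exists j.
apply: max => //.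
- move=> z [Qz|[j [jm ->]]].
    by have [v hv] := inv z Qz; exists v => l; left.
  have [v0 hv0] := inv _ Qm.
  exists (cat (m - j) (fun l => w (j + l)%N) v0) => l.
  rewrite phi_cat; case: ifP => h.
    right; exists (j + l)%N; split; last by rewrite phi_shift.
    by rewrite -(subnKC jm) leq_add2l.
  left; rewrite -phi_shift subnKC //; exact: hv0.
- have keyQ : forall p, Q' p -> Q `<=` closure (orbit_plus F p).
    move=> p [Qp|[j [jm ->]]]; first exact: apc.
    move=> q Qq; have := apc _ Qm _ Qq.
    apply: closure_subset; apply: orbit_trans.
    by exists (m - j)%N, (fun l => w (j + l)%N); rewrite -phi_shift subnKC.
  move=> p Q'p q [Qq|[j [jm ->]]]; first exact: keyQ.
  by apply: cl_phi => //; apply: keyQ.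
Qed.

Lemma setdist0 (Q : set X) y : Q y -> setdist y Q = 0.
Proof.
move=> Qy; apply/eqP; rewrite eq_le; apply/andP; split.
  rewrite -(mdistxx y); apply: ge_inf; first by exists 0 => r [q _ <-]; exact: mdist_ge0.
  by exists y.
apply: lb_le_inf; first by exists (mdist y y), y.
by move=> r [q _ <-]; exact: mdist_ge0.
Qed.

End Aux.

Theorem mainTheorem5 (R : realType) (X U : metricType R) (F : X -> U -> X)
  (hU : compact [set: U])
  (hF : forall u : U, continuous (fun x : X => F x u))
  (hphi : continuous (fun p : nat * X * {ptws nat -> U} => phi F p.1.1 p.1.2 p.2))
  (Q : set X) (hQ : control_set F Q) (k : nat) (hk : (0 < k)%N)
  (hint : EIM F k Q `&` interior Q !=set0) :
  EIM F k Q = Q.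
Proof.
apply/seteqP; split; first by move=> x [].
move=> x Qx.
have [x0 [[Qx0 [d0 [w0 [d0pos P0]]]] ix0]] := hint.
have [e epos eQ] := (nbhs_ballP _ _).1 ix0.
pose r := Num.min e d0 / 2.
have r0 : 0 < r by rewrite divr_gt0 // lt_min epos d0pos.
have rr : r + r = Num.min e d0 by rewrite /r -splitr.
have hQ' := hQ; case: hQ' => [_ apc _].
have cx0 := apc x Qx x0 Qx0.
have [z [[m [w ->]] bz]] := cx0 _ (nbhsx_ballx x0 r r0).
have := @phi_cont _ _ _ F hF m w x _ (nbhsx_ballx (phi F m x w) r r0).
move=> /nbhs_ballP [dl dlpos hdl].
split => //; exists dl, (cat m w w0); split => // n y n0 bxy Qy.
have bm : ball x0 (r + r) (phi F m y w).
  by apply: (ball_triangle bz); exact: hdl.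
rewrite rr in bm.
have Qm : Q (phi F m y w) by apply: eQ; apply: le_ball bm; rewrite ge_min lexx.
have bm0 : ball x0 d0 (phi F m y w) by apply: le_ball bm; rewrite ge_min lexx orbT.
have tr := @traj_in _ _ _ F hF _ hQ _ _ _ Qy Qm.
have zero : forall l, (l <= m)%N -> \sum_(0 <= i < l) setdist (phi F i y (cat m w w0)) Q = 0.
  move=> l lm; rewrite big_mkord big1 // => i _.
  have im : (i <= m)%N by apply: leq_trans (ltnW (ltn_ord i)) lm.
  by rewrite phi_cat im; apply: setdist0; apply: tr.
have k0 : 0 < k%:R^-1 :> R by rewrite invr_gt0 ltr0n.
case: (leqP n m) => nm.
  by rewrite zero // mulr0.
rewrite (big_cat_nat (n := m)) //=; last exact: ltnW.
rewrite zero // add0r -{1}(add0n m) big_addn.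
have := P0 (n - m)%N (phi F m y w); rewrite subn_gt0 => /(_ nm bm0 Qm).
under eq_bigr => i _ do rewrite addnC phi_cat2.
apply: avg_aux; first by rewrite ltr0n subn_gt0.
  by rewrite ler_nat leq_subr.
by [].
Qed.
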